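(* Let $\mathcal{L}_1,\mathcal{L}_2$ be objects of $\mathbf{Cal^0_{Sym}}$ and write $1_\circledast:=\Sigma_1\times\Sigma_2$. There is a bijection $$\xi:\Sigma'_\circledast\cup\{1_\circledast\}\to\mathbf{Cal^0_{Sym}}(\mathcal{L}_1,\mathcal{L}_2^{\mathrm{op}})$$ such that for every $x\in\Sigma'_\circledast\cup\{1_\circledast\}$, $$x=\bigcup\{\{p\}\times\Sigma[\xi(x)(p)]\,;\,p\in\Sigma_1\},$$ where $\xi(x)(p)\in\mathcal{L}_2^{\mathrm{op}}$ is regarded as an element of $\mathcal{L}_2$ and $\Sigma[\cdot]$ denotes the set of atoms of $\mathcal{L}_2$ below it.
   Context: For a complete lattice $\mathcal{L}_i$: $\Sigma_i,\Sigma_i'$ are its atoms and coatoms, $\Sigma[a]$ (resp. $\Sigma'[a]$) the atoms below (resp. coatoms above) $a$, $\mathsf{Cl}(\omega)=\{\Sigma[a];a\in\omega\}$, $\mathcal{L}^{\mathrm{op}}$ the dual lattice. For a map $f:\mathcal{L}_1\to\mathcal{L}_2$ between complete lattices, $f^\circ(b):=\bigvee\{a\in\mathcal{L}_1; f(a)\le b\}$. $\mathbf{Cal^0_{Sym}}$: objects are complete atomistic coatomistic lattices with $\Sigma[x]\cup\Sigma[y]\ne\Sigma$ for all coatoms $x,y$ and $\Sigma'[p]\cup\Sigma'[q]\ne\Sigma'$ for all atoms $p,q$; arrows $\mathcal{L}\to\mathcal{M}$ are maps $f$ preserving arbitrary joins, sending atoms to atoms or $0$, and such that $f^\circ$ sends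 coatoms to coatoms or $1$. For $R\subseteq\Sigma_1\times\Sigma_2$, $p=(p_1,p_2)$: $R_1[p]:=\{q_1;(q_1,p_2)\in R\}$, $R_2[p]:=\{q_2;(p_1,q_2)\in R\}$. $\Sigma'_\circledast:=\{R\subsetneqq\Sigma_1\times\Sigma_2\,;\,R_1[p]\in\mathsf{Cl}(\Sigma_1'\cup\{1\}),\ R_2[p]\in\mathsf{Cl}(\Sigma_2'\cup\{1\})\ \forall p\}$; $\mathcal{L}_1\circledast\mathcal{L}_2:=\{\bigcap\omega;\omega\subseteq\Sigma'_\circledast\cup\{\Sigma_1\times\Sigma_2\}\}$ ordered by inclusion. *)

(* Defs.v *)
(* Joins are handled
   relationally through [is_lub]; the dual lattice L^op is (T, flip le). *)

Set Implicit Arguments.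

Section Order.
Variable T : Type.
Variable le : T -> T -> Prop.

Definition flip_le : T -> T -> Prop := fun x y => le y x.

Definition is_partial_order : Prop :=
  (forall x, le x x) /\
  (forall x y z, le x y -> le y z -> le x z) /\
  (forall x y, le x y -> le y x -> x = y).

Definition is_lub (S : T -> Prop) (a : T) : Prop :=
  (forall x, S x -> le x a) /\ (forall y, (forall x, S x -> le x y) -> le a y).

Definition is_complete_lattice : Prop :=
  is_partial_order /\ forall S : T -> Prop, exists a, is_lub S a.

Definition is_bot (z : T) : Prop := forall x, le z x.
Definition is_top (z : T) : Prop := forall x, le x z.

Definition is_atom (a : T) : Prop :=
  ~ is_bot a /\ forall b, le b a -> is_bot b \/ b = a.

Definition atoms_below (a : T) : T -> Prop := fun q => is_atom q /\ le q a.

End Order.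

Definition is_coatom T (le : T -> T -> Prop) (a : T) := is_atom (flip_le le) a.
Definition coatoms_above T (le : T -> T -> Prop) (a : T) : T -> Prop :=
  fun c => is_coatom le c /\ le a c.

Definition image T U (f : T -> U) (S : T -> Prop) : U -> Prop :=
  fun y => exists x, S x /\ f x = y.

Definition is_atomistic T (le : T -> T -> Prop) : Prop :=
  forall a, is_lub le (atoms_below le a) a.
Definition is_coatomistic T (le : T -> T -> Prop) : Prop :=
  forall a, is_lub (flip_le le) (coatoms_above le a) a.

Definition cal0sym_obj T (le : T -> T -> Prop) : Prop :=
  is_complete_lattice le /\ is_atomistic le /\ is_coatomistic le /\
  (* Sigma[x] u Sigma[y] <> Sigma for all coatoms x, y *)
  (forall x y, is_coatom le x -> is_coatom le y ->
     exists p, is_atom le p /\ ~ le p x /\ ~ le p y) /\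
  (* Sigma'[p] u Sigma'[q] <> Sigma' for all atoms p, q *)
  (forall p q, is_atom le p -> is_atom le q ->
     exists c, is_coatom le c /\ ~ le p c /\ ~ le q c).

Definition cal0sym_arrow T U (leT : T -> T -> Prop) (leU : U -> U -> Prop)
  (f : T -> U) : Prop :=
  (forall (S : T -> Prop) a, is_lub leT S a -> is_lub leU (image f S) (f a)) /\
  (forall p, is_atom leT p -> is_atom leU (f p) \/ is_bot leU (f p)) /\
  (* f°(b) := \/ {a ; f a <= b} sends coatoms to coatoms or 1 *)
  (forall b, is_coatom leU b ->
     forall c, is_lub leT (fun a => leU (f a) b) c ->
       is_coatom leT c \/ is_top leT c).

Definition HomOp T1 T2 (le1 : T1 -> T1 -> Prop) (le2 : T2 -> T2 -> Prop) : Type :=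
  { f : T1 -> T2 | cal0sym_arrow le1 (flip_le le2) f }.

(* 1_circledast = Sigma1 x Sigma2, as a relation *)
Definition one_star T1 T2 (le1 : T1 -> T1 -> Prop) (le2 : T2 -> T2 -> Prop)
  : T1 -> T2 -> Prop := fun q1 q2 => is_atom le1 q1 /\ is_atom le2 q2.

Definition in_SigmaStar' T1 T2 (le1 : T1 -> T1 -> Prop) (le2 : T2 -> T2 -> Prop)
  (R : T1 -> T2 -> Prop) : Prop :=
  (forall q1 q2, R q1 q2 -> is_atom le1 q1 /\ is_atom le2 q2) /\
  ~ (forall q1 q2, is_atom le1 q1 -> is_atom le2 q2 -> R q1 q2) /\
  (forall p1 p2, is_atom le1 p1 -> is_atom le2 p2 ->
     (* R1[p] in Cl(Sigma1' u {1}) *)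
     (exists a, (is_coatom le1 a \/ is_top le1 a) /\
        forall q1, R q1 p2 <-> atoms_below le1 a q1) /\
     (* R2[p] in Cl(Sigma2' u {1}) *)
     (exists b, (is_coatom le2 b \/ is_top le2 b) /\
        forall q2, R p1 q2 <-> atoms_below le2 b q2)).

Definition SigmaStar1 T1 T2 (le1 : T1 -> T1 -> Prop) (le2 : T2 -> T2 -> Prop) : Type :=
  { R : T1 -> T2 -> Prop | in_SigmaStar' le1 le2 R \/ R = one_star le1 le2 }.

(* Main.v *)
Require Import Defs.
From Stdlib Require Import Classical ClassicalEpsilon FunctionalExtensionality PropExtensionality ProofIrrelevance.

Lemma lub_unique {T} (le : T -> T -> Prop) S a b :
  is_partial_order le -> is_lub le S a -> is_lub le S b -> a = b.
Proof.
  intros [_ [_ anti]] [Ha1 Ha2] [Hb1 Hb2]. apply anti; auto.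
Qed.

Lemma glb_ex {T} (le : T -> T -> Prop) :
  is_complete_lattice le -> forall S, exists c, is_lub (flip_le le) S c.
Proof.
  intros [PO CL] S.
  destruct (CL (fun y => forall x, S x -> le y x)) as [c [Hc1 Hc2]].
  exists c. split.
  - intros x Hx. unfold flip_le. apply Hc2. intros y Hy. apply Hy; auto.
  - intros y Hy. unfold flip_le. apply Hc1. intros x Hx. apply Hy; auto.
Qed.

Lemma le_of_atoms {T} (le : T -> T -> Prop) x y :
  is_atomistic le -> (forall q, atoms_below le x q -> le q y) -> le x y.
Proof. intros At H. apply (At x). exact H. Qed.

Lemma eq_of_atoms {T} (le : T -> T -> Prop) x y :
  is_partial_order le -> is_atomistic le ->
  (forall q, is_atom le q -> (le q x <-> le q y)) -> x = y.
Proof.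
  intros PO At H. destruct PO as [_ [_ anti]]. apply anti; apply le_of_atoms; auto;
  intros q [qa qle]; apply (H q qa); auto.
Qed.

Lemma atom_below_atom {T} (le : T -> T -> Prop) p q :
  is_atom le p -> is_atom le q -> le q p -> q = p.
Proof.
  intros [_ Hp] [Hq _] Hqp. destruct (Hp q Hqp); [contradiction | auto].
Qed.

Lemma top_ex {T} (le : T -> T -> Prop) :
  is_complete_lattice le -> exists t, is_top le t.
Proof.
  intros [_ CL]. destruct (CL (fun _ => True)) as [t [Ht _]]. exists t.
  intro x. apply Ht. exact I.
Qed.

Lemma noatoms_top {T} (le : T -> T -> Prop) x :
  is_atomistic le -> ~ (exists q, is_atom le q) -> is_top le x.
Proof.
  intros At N y. apply le_of_atoms; auto. intros q [qa _]. exfalso; eauto.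
Qed.

Arguments top_ex {T le}.
Arguments atom_below_atom {T le p q}.
Arguments glb_ex {T le}.

Definition PR {T1 T2} (le1 : T1 -> T1 -> Prop) (le2 : T2 -> T2 -> Prop)
  (R : T1 -> T2 -> Prop) : Prop :=
 (forall q1 q2, R q1 q2 -> is_atom le1 q1 /\ is_atom le2 q2) /\
 (forall p1 p2, is_atom le1 p1 -> is_atom le2 p2 ->
   (exists a, (is_coatom le1 a \/ is_top le1 a) /\
        forall q1, R q1 p2 <-> atoms_below le1 a q1) /\
   (exists b, (is_coatom le2 b \/ is_top le2 b) /\
        forall q2, R p1 q2 <-> atoms_below le2 b q2)).

Lemma PR_of {T1 T2} (le1 : T1 -> T1 -> Prop) (le2 : T2 -> T2 -> Prop) :
  cal0sym_obj le1 -> cal0sym_obj le2 -> forall x : SigmaStar1 le1 le2,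
  PR le1 le2 (proj1_sig x).
Proof.
  intros [C1 _] [C2 _] [R [HR | HR]]; simpl.
  - destruct HR as [Hsub [_ Hc]]. split; auto.
  - subst. split.
    + intros q1 q2 H; exact H.
    + intros p1 p2 hp1 hp2.
      destruct (top_ex C1) as [t1 Ht1]. destruct (top_ex C2) as [t2 Ht2].
      split.
      * exists t1. split; [right; auto|]. intro q1. unfold one_star, atoms_below.
        split; intros [? ?]; auto.
      * exists t2. split; [right; auto|]. intro q2. unfold one_star, atoms_below.
        split; intros [? ?]; auto.
Qed.

Arguments PR_of {T1 T2 le1 le2}.

Definition G {T1 T2} (le1 : T1 -> T1 -> Prop) (le2 : T2 -> T2 -> Prop)
  (R : T1 -> T2 -> Prop) (a : T1) : T2 -> Prop :=
  fun b => exists p, is_atom le1 p /\ le1 p a /\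
     (forall q2, R p q2 <-> atoms_below le2 b q2).

Lemma Katom {T1 T2} (le1 : T1 -> T1 -> Prop) (le2 : T2 -> T2 -> Prop) R a c r :
  is_partial_order le2 -> PR le1 le2 R ->
  is_lub (flip_le le2) (G le1 le2 R a) c -> is_atom le2 r ->
  (le2 r c <-> forall p, is_atom le1 p -> le1 p a -> R p r).
Proof.
  intros [_ [tr _]] [_ HP] [Hc1 Hc2] hr. split.
  - intros Hrc p hp hpa.
    destruct (HP p r hp hr) as [_ [b [_ Hb]]].
    assert (Gb : G le1 le2 R a b) by (exists p; auto).
    apply Hb. split; auto. apply tr with c; auto. apply Hc1; auto.
  - intros H. apply Hc2. intros b [p [hp [hpa Hb]]]. unfold flip_le.
    apply Hb. auto.
Qed.

Arguments Katom {T1 T2 le1 le2 R a c r}.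

Lemma arrow_of {T1 T2} (le1 : T1 -> T1 -> Prop) (le2 : T2 -> T2 -> Prop) R f :
  cal0sym_obj le1 -> cal0sym_obj le2 -> PR le1 le2 R ->
  (forall a, is_lub (flip_le le2) (G le1 le2 R a) (f a)) ->
  cal0sym_arrow le1 (flip_le le2) f.
Proof.
  intros [[PO1 CL1] [At1 _]] [[PO2 CL2] [At2 _]] HPR Hf.
  pose proof HPR as [Hsub HP].
  assert (K : forall a r, is_atom le2 r ->
     (le2 r (f a) <-> forall p, is_atom le1 p -> le1 p a -> R p r)).
  { intros a r hr. apply Katom; auto. }
  destruct PO1 as [rf1 [tr1 an1]]. destruct PO2 as [rf2 [tr2 an2]].
  split; [|split].
  - intros S a [Hl1 Hl2]. split.
    + intros y [s [Hs <-]]. unfold flip_le. apply le_of_atoms; auto.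
      intros q [qa qle]. apply K; auto. intros p hp hps.
      apply (proj1 (K a q qa) qle); auto. apply tr1 with s; auto.
    + intros y Hy. unfold flip_le. apply le_of_atoms; auto.
      intros q [qa qy]. apply K; auto. intros p hp hpa.
      assert (hs : forall s, S s -> le2 q (f s)).
      { intros s Hs. apply tr2 with y; auto. apply Hy. exists s; auto. }
      destruct (HP p q hp qa) as [[a' [_ Ha']] _].
      assert (aa' : le1 a a').
      { apply Hl2. intros s Hs. apply le_of_atoms; auto.
        intros q1 [q1a q1s]. apply Ha'. apply (proj1 (K s q qa) (hs s Hs)); auto. }
      apply Ha'. split; auto. apply tr1 with a; auto.
  - intros p hp. change (is_coatom le2 (f p) \/ is_top le2 (f p)).
    destruct (classic (exists r, is_atom le2 r)) as [[r hr] | N].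
    + destruct (HP p r hp hr) as [_ [b [Hbt Hb]]].
      replace (f p) with b; auto. symmetry. apply eq_of_atoms with (le := le2); auto.
      split; [exact rf2 | split; [exact tr2 | exact an2]].
      intros q qa. rewrite K; auto. split.
      * intros H. apply Hb, H; auto.
      * intros H p' hp' hp'p. rewrite (atom_below_atom hp hp' hp'p).
        apply Hb. split; auto.
    + right. apply noatoms_top; auto.
  - intros b Hb c Hc.
    assert (hb : is_atom le2 b) by exact Hb.
    destruct (classic (exists p1, is_atom le1 p1)) as [[p1 hp1] | N].
    + destruct (HP p1 b hp1 hb) as [[a' [Ha't Ha']] _].
      replace c with a'; auto. apply lub_unique with (le := le1)
        (S := fun a => flip_le le2 (f a) b).
      * split; [exact rf1 | split; [exact tr1 | exact an1]].
      * split.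
        -- intros a Ha. apply le_of_atoms; auto. intros q [qa qle].
           apply Ha'. unfold flip_le in Ha. apply (proj1 (K a b hb) Ha); auto.
        -- intros y Hy. apply Hy. unfold flip_le. apply K; auto.
           intros p hp hpa. apply Ha'. split; auto.
      * exact Hc.
    + right. apply noatoms_top; auto.
Qed.

Arguments arrow_of {T1 T2 le1 le2 R f}.

Definition fR {T1 T2} (le1 : T1 -> T1 -> Prop) (le2 : T2 -> T2 -> Prop)
  (C2 : is_complete_lattice le2) (R : T1 -> T2 -> Prop) (a : T1) : T2 :=
  proj1_sig (constructive_indefinite_description _ (glb_ex C2 (G le1 le2 R a))).

Arguments fR {T1 T2} le1 {le2} C2 R a.

Lemma fR_spec {T1 T2} (le1 : T1 -> T1 -> Prop) (le2 : T2 -> T2 -> Prop)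
  (C2 : is_complete_lattice le2) R a :
  is_lub (flip_le le2) (G le1 le2 R a) (fR le1 C2 R a).
Proof.
  unfold fR. exact (proj2_sig (constructive_indefinite_description _ _)).
Qed.

Arguments fR_spec {T1 T2} le1 {le2} C2 R a.

Lemma sig_eq {A} {P : A -> Prop} (x y : {a : A | P a}) :
  proj1_sig x = proj1_sig y -> x = y.
Proof.
  destruct x as [x px], y as [y py]; simpl; intros E; subst.
  f_equal; apply proof_irrelevance.
Qed.

Theorem lemma4p4 (T1 T2 : Type) (le1 : T1 -> T1 -> Prop) (le2 : T2 -> T2 -> Prop)
  (H1 : cal0sym_obj le1) (H2 : cal0sym_obj le2) :
  exists xi : SigmaStar1 le1 le2 -> HomOp le1 le2,
    (forall x y, xi x = xi y -> x = y) /\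
    (forall h, exists x, xi x = h) /\
    (forall x q1 q2,
       proj1_sig x q1 q2 <->
       (is_atom le1 q1 /\ atoms_below le2 (proj1_sig (xi x) q1) q2)).
Proof.
  pose proof H1 as [[PO1 CL1] [At1 _]].
  pose proof H2 as [C2 [At2 _]].
  pose proof C2 as [PO2 CL2].
  set (xi := fun x : SigmaStar1 le1 le2 =>
     exist (fun f => cal0sym_arrow le1 (flip_le le2) f) (fR le1 C2 (proj1_sig x))
       (arrow_of H1 H2 (PR_of H1 H2 x) (fR_spec le1 C2 (proj1_sig x)))
     : HomOp le1 le2).
  assert (P3 : forall x q1 q2,
       proj1_sig x q1 q2 <->
       (is_atom le1 q1 /\ atoms_below le2 (proj1_sig (xi x) q1) q2)).
  { intros x q1 q2. simpl. pose proof (PR_of H1 H2 x) as HPR.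
    pose proof HPR as [Hsub _].
    destruct PO1 as [rf1 [tr1 an1]].
    split.
    - intros Hx. destruct (Hsub _ _ Hx) as [h1 h2]. split; auto. split; auto.
      apply (proj2 (Katom PO2 HPR (fR_spec le1 C2 (proj1_sig x) q1) h2)).
      intros p hp hpq. rewrite (atom_below_atom h1 hp hpq). auto.
    - intros [h1 [h2 Hle]].
      apply (proj1 (Katom PO2 HPR (fR_spec le1 C2 (proj1_sig x) q1) h2) Hle); auto. }
  exists xi. split; [|split]; [| |exact P3].
  - intros x y E. apply sig_eq.
    apply functional_extensionality; intro q1.
    apply functional_extensionality; intro q2.
    apply propositional_extensionality. rewrite !P3. rewrite E. tauto.
  - intros [fh Hh].
    pose proof Hh as [JP [AT FO]].
    destruct PO1 as [rf1 [tr1 an1]].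
    destruct PO2 as [rf2 [tr2 an2]].
    assert (mono : forall x y, le1 x y -> le2 (fh y) (fh x)).
    { intros x y Hxy.
      assert (Hl : is_lub le1 (fun z => z = x \/ z = y) y).
      { split. intros z [-> | ->]; auto. intros z Hz. apply Hz; auto. }
      apply (proj1 (JP _ _ Hl)). exists x; auto. }
    set (Rh := fun q1 q2 => is_atom le1 q1 /\ atoms_below le2 (fh q1) q2).
    assert (Mh : in_SigmaStar' le1 le2 Rh \/ Rh = one_star le1 le2).
    { destruct (classic (forall q1 q2, is_atom le1 q1 -> is_atom le2 q2 -> Rh q1 q2))
        as [Hall | Hn].
      - right. apply functional_extensionality; intro q1.
        apply functional_extensionality; intro q2.
        apply propositional_extensionality. unfold one_star. split.
        + intros [a [b _]]; auto.
        + intros [a b]; auto.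
      - left. split; [|split].
        + intros q1 q2 [a [b _]]; auto.
        + exact Hn.
        + intros p1 p2 hp1 hp2. split.
          * destruct (CL1 (fun a => le2 p2 (fh a))) as [c Hc].
            assert (hp2' : is_coatom (flip_le le2) p2) by exact hp2.
            exists c. split; [exact (FO p2 hp2' c Hc)|].
            intro q1. split.
            -- intros [q1a [_ q2le]]. split; auto. apply Hc; auto.
            -- intros [q1a q1c]. split; auto. split; auto.
               apply tr2 with (fh c); auto.
               apply (proj2 (JP _ _ Hc)). intros x [a [Ha <-]]. exact Ha.
          * exists (fh p1). split; [exact (AT p1 hp1)|].
            intro q2. unfold Rh. tauto. }
    exists (exist _ Rh Mh). apply sig_eq. simpl.
    apply functional_extensionality; intro a.
    assert (HPR := PR_of H1 H2 (exist _ Rh Mh)). simpl in HPR.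
    apply eq_of_atoms with (le := le2); auto.
    { split; [exact rf2 | split; [exact tr2 | exact an2]]. }
    intros r hr.
    assert (PO2' : is_partial_order le2).
    { split; [exact rf2 | split; [exact tr2 | exact an2]]. }
    rewrite (Katom PO2' HPR (fR_spec le1 C2 Rh a) hr).
    pose proof (JP _ _ (At1 a)) as [J1 J2].
    split.
    + intros H. apply J2. intros x [p [[hp hpa] <-]]. apply (H p hp hpa).
    + intros H p hp hpa. split; [exact hp|]. split; [exact hr|].
      apply tr2 with (fh a); [exact H|]. apply J1. exists p. split; [split; assumption | reflexivity].
Qed.
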